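(* Let $q$ be a prime power, $r\ge 1$ an integer, and $\mathcal{S}$ a $q^r$-divisible spanning set of $q^{r+1}$ points in $\mathrm{PG}(v-1,q)$. If $\mathcal{S}$ contains a full affine $(r+1)$-space, i.e. there exist an $(r+1)$-space $L$ and an $r$-space $F\subseteq L$ such that every point of $L$ not contained in $F$ belongs to $\mathcal{S}$, then $\mathcal{S}$ is an $(r+1)$-cylinder.
   Context: $\mathrm{PG}(v-1,q)$ is the projective space of $\mathbb{F}_q^v$; a $k$-space is a $k$-dimensional subspace of $\mathbb{F}_q^v$ (points are $1$-spaces, hyperplanes $(v-1)$-spaces). A set $\mathcal{S}$ of points is spanning if its points span $\mathbb{F}_q^v$, and it is $q^r$-divisible if $|\mathcal{S}\cap H|\equiv|\mathcal{S}|\pmod{q^r}$ for every hyperplane $H$. An $(r+1)$-cylinder is a multiset of $q^{r+1}$ points which arises as the union (counted with multiplicity) of the point sets $L_1\setminus F,\dots,L_q\setminus F$, where $L_1,\dots,L_q$ are $(r+1)$-spaces and $F$ is an $r$-space contained in every $L_i$ ($L_i\setminus F$ denotes the set of points of $L_i$ not in $F$). *)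

(* Defs.v *)
From mathcomp Require Import all_boot all_order all_algebra all_field.
Set Implicit Arguments. Unset Strict Implicit. Unset Printing Implicit Defensive.
Import GRing.Theory.
Local Open Scope ring_scope.

(* Subspaces of K^v are represented by their canonical row-space matrices
   <<A>>%MS : 'M[K]_v ; a k-space is such a matrix of rank k. *)

Definition is_point (K : fieldType) (v : nat) (P : 'M[K]_v) : bool :=
  (\rank P == 1)%N && (<<P>>%MS == P).

Definition pts_in (K : finFieldType) (v : nat) (S : {set 'M[K]_v}) (H : 'M[K]_v)
  : nat := #|[set P in S | (P <= H)%MS]|.

Definition spanning (K : finFieldType) (v : nat) (S : {set 'M[K]_v}) : Prop :=
  \rank (\sum_(P in S) P)%MS = v.

Definition divisible (K : finFieldType) (v : nat) (S : {set 'M[K]_v}) (m : nat)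
  : Prop :=
  forall H : 'M[K]_v, \rank H = v.-1 -> pts_in S H = #|S| %[mod m].

Definition contains_affine (K : finFieldType) (v : nat) (S : {set 'M[K]_v})
  (r : nat) : Prop :=
  exists (L F : 'M[K]_v),
    [/\ \rank L = r.+1, \rank F = r, (F <= L)%MS &
        forall P, is_point P -> (P <= L)%MS -> ~~ (P <= F)%MS -> P \in S].

(* S (as a multiset with multiplicities in {0,1}) is an (r+1)-cylinder:
   the multiset sum over i < q of the point sets L_i \ F, where q = #|K|. *)
Definition is_cylinder (K : finFieldType) (v : nat) (S : {set 'M[K]_v})
  (r : nat) : Prop :=
  exists (F : 'M[K]_v) (L : 'I_#|K| -> 'M[K]_v),
    [/\ \rank F = r,
        forall i, \rank (L i) = r.+1 /\ (F <= L i)%MS &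
        forall P, is_point P ->
          ((P \in S) : nat) =
          (\sum_(i < #|K|) (((P <= L i)%MS && ~~ (P <= F)%MS) : nat))%N].

(* Main.v *)
Require Import Defs.
From mathcomp Require Import all_boot all_order all_algebra all_field.
From mathcomp Require Import zify.
Set Implicit Arguments. Unset Strict Implicit. Unset Printing Implicit Defensive.
Import GRing.Theory.
Local Open Scope ring_scope.



Lemma card_fibers (T U : finType) (A : {set T}) (B : {set U}) (g : T -> U) (c : nat) :
  (forall x, x \in A -> g x \in B) ->
  (forall u, u \in B -> #|[set x in A | g x == u]| = c) ->
  #|A| = (#|B| * c)%N.
Proof.
move=> gAB Hc.
rewrite -sum1_card (partition_big g (mem B)) //=.
rewrite -sum_nat_const; apply: eq_bigr => u uB.
rewrite -(Hc u uB) -sum1_card; apply: eq_bigl => x; by rewrite inE.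
Qed.

Section Gen.
Variables (K : finFieldType) (v : nat).
Local Notation q := #|K|.

Lemma card_sub_mx m (X : 'M[K]_(m, v)) :
  #|[set y : 'rV[K]_v | (y <= X)%MS]| = (q ^ \rank X)%N.
Proof.
have := card_mx K 1 (\rank X); rewrite mul1n => <-.
have -> : [set y : 'rV[K]_v | (y <= X)%MS] =
   (fun u : 'rV_(\rank X) => u *m row_base X) @: setT.
  apply/setP=> y; rewrite inE; apply/idP/imsetP.
    move=> yX; have /submxP[u ->] : (y <= row_base X)%MS by rewrite eq_row_base.
    by exists u.
  by case=> u _ ->; apply: submx_trans (submxMl u _) _; rewrite eq_row_base.
by rewrite card_imset ?cardsT //; exact: row_free_inj (row_base_free X).
Qed.

Lemma exists_col (a a0 : 'rV[K]_v) : ~~ (a <= a0)%MS ->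
  exists t : 'cV[K]_v, a0 *m t = 0 /\ a *m t = 1.
Proof.
rewrite submxE => /eqP nz.
have [j nzj] : exists j, (a *m cokermx a0) 0 j != 0.
  apply/existsP; apply: contraT; rewrite negb_exists => /forallP H.
  case: nz; apply/matrixP => i j; rewrite [RHS]mxE (ord1 i); apply/eqP; move: (H j); by rewrite negbK.
set c := (a *m cokermx a0) 0 j.
have key : forall u : 'rV[K]_v,
    u *m (\col_l (c^-1 * cokermx a0 l j)) = (c^-1 * (u *m cokermx a0) 0 j)%:M.
  move=> u; apply/matrixP=> i k; rewrite (ord1 i) (ord1 k) !mxE eqxx mulr1n mulr_sumr.
  by apply: eq_bigr => l _; rewrite mxE mulrCA.
exists (\col_l (c^-1 * cokermx a0 l j)); rewrite !key mulmx_coker mxE mulr0.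
by split; [exact: raddf0 | rewrite mulVf].
Qed.

Lemma point_nz_row (P : 'M[K]_v) : is_point P ->
  nz_row P != 0 /\ (nz_row P :=: P)%MS.
Proof.
case/andP=> /eqP r1 _.
have nz : nz_row P != 0 by rewrite nz_row_eq0 -mxrank_eq0 r1.
split=> //; apply/eqmxP; rewrite -(mxrank_leqif_eq (nz_row_sub P)).
by rewrite r1 rank_rV nz.
Qed.

Lemma point_sub m (P : 'M[K]_v) (X : 'M[K]_(m, v)) : is_point P ->
  (P <= X)%MS = (nz_row P <= X)%MS.
Proof. by case/point_nz_row=> _ e; rewrite e. Qed.

Lemma genmx_point (y : 'rV[K]_v) : y != 0 -> is_point <<y>>%MS.
Proof. by move=> nz; rewrite /is_point mxrank_gen rank_rV nz genmx_id eqxx. Qed.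

Lemma point_eq (P Q : 'M[K]_v) : is_point P -> is_point Q -> (P <= Q)%MS -> P = Q.
Proof.
move=> pP pQ sPQ.
have e : (P == Q)%MS.
  by rewrite -(mxrank_leqif_eq sPQ); case/andP: pP => /eqP -> _; case/andP: pQ => /eqP -> _.
case/andP: pP => _ /eqP <-; case/andP: pQ => _ /eqP <-; exact/eq_genmx/eqmxP.
Qed.

Lemma vec_point_eq (y : 'rV[K]_v) (P : 'M[K]_v) : y != 0 -> is_point P ->
  (y <= P)%MS -> <<y>>%MS = P.
Proof. move=> nz pP yP; apply: point_eq (genmx_point nz) pP _; by rewrite genmxE. Qed.

Lemma pts_vec (T : pred 'M[K]_v) (X : 'M[K]_v) :
  (#|[set P | is_point P && T P && (P <= X)%MS]| * q.-1)%N =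
  #|[set y : 'rV[K]_v | (y != 0) && T <<y>>%MS && (y <= X)%MS]|.
Proof.
symmetry; apply: (card_fibers (g := fun y : 'rV[K]_v => <<y>>%MS)) => [y|P].
  rewrite !inE => /andP[/andP[nz Ty] yX]; rewrite genmx_point // Ty /=.
  by rewrite genmxE.
rewrite inE => /andP[/andP[pP TP] PX].
have -> : [set y in [set y : 'rV[K]_v | (y != 0) && T <<y>>%MS && (y <= X)%MS] |
            <<y>>%MS == P] = [set y : 'rV[K]_v | (y <= P)%MS] :\ 0.
  apply/setP=> y; rewrite !inE; apply/idP/idP.
    case/andP=> /andP[/andP[nz _] _] /eqP <-; by rewrite nz genmxE submx_refl.
  case/andP=> nz yP; rewrite nz (vec_point_eq nz pP yP) TP eqxx andbT /=.
  exact: submx_trans yP PX.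
have := cardsD1 0 [set y : 'rV[K]_v | (y <= P)%MS].
rewrite inE sub0mx card_sub_mx add1n.
by case/andP: pP => /eqP -> _; rewrite expn1 => ->.
Qed.

End Gen.



Lemma card_sumb (T : finType) (A : {set T}) (p : pred T) :
  #|[set x in A | p x]| = (\sum_(x in A) (p x : nat))%N.
Proof.
rewrite -sum1_card (eq_bigl (fun x => (x \in A) && p x)) => [|x]; last by rewrite inE.
rewrite big_mkcondr /=; apply: eq_bigr => x _; by case: (p x).
Qed.

Lemma sum_const_filter (T : finType) (A : {set T}) (p : pred T) c :
  (\sum_(x in A | p x) c = #|[set x in A | p x]| * c)%N.
Proof.
rewrite card_sumb big_distrl /= big_mkcondr; apply: eq_bigr => x _.
by case: (p x); rewrite ?mul1n ?mul0n.
Qed.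

Section Cong.
Variables (K : finFieldType) (v : nat).
Local Notation q := #|K|.

Lemma cong_W (S : {set 'M[K]_v}) (r : nat) : (0 < r)%N -> (r <= v)%N ->
  {subset S <= @is_point K v} -> divisible S (q ^ r) -> #|S| = (q ^ r.+1)%N ->
  forall W : 'M[K]_v, \rank W = (v - r)%N -> (q %| pts_in S W)%N.
Proof.
move=> r0 rv Spt dS cS W rW.
have q1 : (1 < q)%N by apply/card_gt1P; exists 0, 1; rewrite !inE eq_sym oner_neq0.
set Wp := kermx W^T.
have rWp : \rank Wp = r by rewrite mxrank_ker mxrank_tr rW subKn.
have WpW : forall a : 'rV[K]_v, (a <= Wp)%MS -> W *m a^T = 0.
  move=> a /sub_kermxP aW; by rewrite -[W]trmxK -trmx_mul aW trmx0.
set A := [set a : 'rV[K]_v | (a <= Wp)%MS].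
have cA : #|A| = (q ^ r)%N by rewrite card_sub_mx rWp.
have cnt : forall P, P \in S -> #|[set a in A | (P <= kermx a^T)%MS]| =
    if (P <= W)%MS then (q ^ r)%N else (q ^ r.-1)%N.
  move=> P PS; have pP := Spt P PS.
  case: ifP => PW.
    rewrite -cA; apply: eq_card => a; rewrite !inE andb_idr // => aWp.
    case/submxP: PW => D ->; by rewrite sub_kermx -mulmxA WpW // mulmx0.
  have [nzy ey] := point_nz_row pP; set y := nz_row P in nzy ey.
  set g := fun a : 'rV[K]_v => (y *m a^T) 0 0.
  have gE : forall a, (P <= kermx a^T)%MS = (g a == 0).
    move=> a; rewrite (point_sub _ pP) sub_kermx /g; apply/eqP/eqP => [->|h].
      by rewrite mxE.
    by rewrite [y *m a^T]mx11_scalar h raddf0.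
  have glin : forall a b (u : K), g (a + u *: b) = g a + u * g b.
    by move=> a b u; rewrite /g linearD linearZ /= mulmxDr -scalemxAr !mxE.
  have [a0 a0A ga0] : exists2 a0, a0 \in A & g a0 = 1.
    have [i gi] : exists i, g (row i Wp) != 0.
      apply/existsP; apply: contraFT PW; rewrite negb_exists => /forallP H.
      have yk : (y <= kermx Wp^T)%MS.
        apply/sub_kermxP/matrixP=> i j; rewrite (ord1 i) [RHS]mxE.
        move: (H j); rewrite negbK /g => /eqP <-; rewrite !mxE.
        by apply: eq_bigr => k _; rewrite !mxE.
      have sWk : (W <= kermx Wp^T)%MS.
        by apply/sub_kermxP; rewrite -[W *m _]trmxK trmx_mul trmxK mulmx_ker trmx0.
      have eWk : (W == kermx Wp^T)%MS.
        by rewrite -(mxrank_leqif_eq sWk) mxrank_ker mxrank_tr rWp rW.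
      by rewrite -ey (eqmxP eWk).
    exists ((g (row i Wp))^-1 *: row i Wp).
      by rewrite inE scalemx_sub // row_sub.
    by rewrite -[_ *: _]add0r glin {1}/g linear0 mulmx0 mxE add0r mulVf.
  have fib : forall u, #|[set a in A | g a == u]| = #|[set a in A | g a == 0]|.
    move=> u.
    have -> : [set a in A | g a == u] =
              (fun a => a + u *: a0) @: [set a in A | g a == 0].
      apply/setP=> a; rewrite inE; apply/idP/imsetP.
        case/andP=> aA /eqP gau; exists (a - u *: a0); last by rewrite subrK.
        rewrite !inE -scaleNr glin ga0 gau mulr1 subrr eqxx andbT.
        move: aA a0A; rewrite !inE => aA a0A.
        by rewrite addmx_sub // scalemx_sub.
      case=> b; rewrite !inE => /andP[bA /eqP gb0] ->.
      by rewrite glin gb0 ga0 mulr1 add0r eqxx andbT addmx_sub // scalemx_sub //; move: a0A; rewrite inE.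
    by rewrite card_imset //; exact: addIr.
  have := card_fibers (B := [set: K]) (g := g) (A := A) (fun _ _ => in_setT _)
        (fun u _ => fib u).
  rewrite cA cardsT.
  have -> : [set a in A | P <= kermx a^T]%MS = [set a in A | g a == 0].
    by apply/setP=> a; rewrite !inE gE.
  rewrite -{1}(prednK r0) expnS => /eqP; rewrite eqn_mul2l; case/orP; last by move/eqP.
  by rewrite -(ltn_predK q1).
have sumE : (\sum_(a in A) pts_in S (kermx a^T) =
    \sum_(P in S) #|[set a in A | (P <= kermx a^T)%MS]|)%N.
  rewrite /pts_in; under eq_bigr do rewrite card_sumb.
  rewrite exchange_big; apply: eq_bigr => P _; by rewrite card_sumb.
have dvdL : (q ^ r %| \sum_(a in A) pts_in S (kermx a^T))%N.
  apply: dvdn_sum => a aA; case: (eqVneq a 0) => [->|nz].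
    have -> : pts_in S (kermx (0 : 'rV[K]_v)^T) = #|S|.
      rewrite /pts_in; apply: eq_card => P; rewrite !inE sub_kermx linear0 mulmx0 eqxx.
      by rewrite andbT.
    by rewrite cS expnS dvdn_mull.
  have rk : \rank (kermx a^T) = v.-1 by rewrite mxrank_ker mxrank_tr rank_rV nz subn1.
  by rewrite /dvdn (dS _ rk) cS expnS modnMl.
have sumR : (\sum_(P in S) #|[set a in A | (P <= kermx a^T)%MS]| =
    pts_in S W * q ^ r + #|[set P in S | ~~ (P <= W)%MS]| * q ^ r.-1)%N.
  rewrite (bigID (fun P => (P <= W)%MS)) /=.
  rewrite (eq_bigr (fun _ => q ^ r)%N); last by move=> P /andP[PS PW]; rewrite cnt // PW.
  rewrite [X in (_ + X)%N](eq_bigr (fun _ => q ^ r.-1)%N); last first.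
    by move=> P /andP[PS PW]; rewrite cnt // (negbTE PW).
  by rewrite !sum_const_filter.
have mk : (pts_in S W + #|[set P in S | ~~ (P <= W)%MS]|)%N = #|S|.
  rewrite /pts_in !card_sumb -big_split /= -sum1_card; apply: eq_bigr => P _.
  by case: (P <= W)%MS.
move: dvdL; rewrite sumE sumR (dvdn_addr _ (dvdn_mull _ (dvdnn _))).
rewrite -{1}(prednK r0) expnS dvdn_pmul2r ?expn_gt0 ?(ltnW q1) // => qk.
by rewrite -(dvdn_addl _ qk) mk cS expnS dvdn_mulr.
Qed.
End Cong.



Section Coord.
Variables (K : finFieldType) (v r : nat) (F : 'M[K]_v).
Hypothesis rF : \rank F = r.
Hypothesis rv : (r <= v)%N.
Local Notation q := #|K|.

Definition Bm := row_ebase F.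
Definition Em : 'M[K]_v := pid_mx r.
Definition Ec : 'M[K]_v := locked (copid_mx r).
Definition GM (M : 'M[K]_v) := invmx Bm *m (Em - Ec *m M *m Em).
Definition WM M := kermx (GM M).
Definition ca (y : 'rV[K]_v) := y *m invmx Bm *m Ec.
Definition cb (y : 'rV[K]_v) := y *m invmx Bm *m Em.

Lemma EE : Em *m Em = Em. Proof. exact: pid_mx_id. Qed.
Lemma EcE : Ec *m Em = 0. Proof. by rewrite /Ec -lock; exact: mul_copid_mx_pid. Qed.
Lemma EEc : Em *m Ec = 0. Proof. by rewrite /Ec -lock; exact: mul_pid_mx_copid. Qed.
Lemma EpEc : Em + Ec = 1%:M. Proof. by rewrite /Ec -lock /copid_mx addrC subrK. Qed.
Lemma Bunit : Bm \in unitmx. Proof. exact: row_ebase_unit. Qed.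

Lemma Fsub : (F :=: Em *m Bm)%MS.
Proof.
rewrite -{1}(mulmx_ebase F) rF -mulmxA; apply: eqmxMfull.
by rewrite row_full_unit col_ebase_unit.
Qed.

Lemma memW M y : (y <= WM M)%MS = (cb y == ca y *m M *m Em).
Proof. by rewrite sub_kermx /GM mulmxA mulmxBr subr_eq0 /ca /cb !mulmxA. Qed.

Lemma rankW M : \rank (WM M) = (v - r)%N.
Proof.
rewrite mxrank_ker; congr (_ - _)%N.
have -> : GM M = (invmx Bm *m (1%:M - Ec *m M *m Em)) *m Em.
  by rewrite /GM -[RHS]mulmxA mulmxBl mul1mx -[Ec *m M *m Em *m Em]mulmxA EE.
have U : (1%:M - Ec *m M *m Em) \in unitmx.
  have h : (1%:M + Ec *m M *m Em) *m (1%:M - Ec *m M *m Em) = 1%:M.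
    rewrite mulmxDl mul1mx mulmxBr mulmx1 -!mulmxA (mulmxA Em Ec) EEc mul0mx.
    by rewrite !mulmx0 subr0 subrK.
  by case: (mulmx1_unit h).
have hf : row_full (invmx Bm *m (1%:M - Ec *m M *m Em)).
  by rewrite row_full_unit unitmx_mul unitmx_inv Bunit.
by rewrite (eqmxMfull _ hf) rank_pid_mx.
Qed.

Lemma FsubE m (C : 'M[K]_(m, v)) : (C <= F)%MS = (C <= Em *m Bm)%MS.
Proof. exact: ((Fsub.2 m C).2). Qed.

Lemma subE_F (z : 'rV[K]_v) : (z <= Em)%MS -> (z *m Bm <= F)%MS.
Proof. by move=> zE; rewrite FsubE; exact: submxMr. Qed.

Lemma capWF M (y : 'rV[K]_v) : (y <= WM M)%MS -> (y <= F)%MS -> y = 0.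
Proof.
rewrite memW FsubE => /eqP h /submxP [D yD].
have k : y *m invmx Bm = D *m Em by rewrite yD -mulmxA mulmxK ?Bunit.
move: h; rewrite /ca /cb k -(mulmxA D Em Ec) EEc mulmx0 !mul0mx -mulmxA EE => h.
by rewrite yD mulmxA h mul0mx.
Qed.

Lemma decomp y : y = (ca y + cb y) *m Bm.
Proof.
by rewrite /ca /cb -mulmxDr addrC EpEc mulmx1 mulmxKV ?Bunit.
Qed.

Lemma cb_sub y : (cb y <= Em)%MS. Proof. exact: submxMl. Qed.

Lemma count_M (y0 y : 'rV[K]_v) : ~~ (ca y <= ca y0)%MS ->
  #|[set M | (y0 <= WM M)%MS]| =
  (q ^ r * #|[set M | (y0 <= WM M)%MS && (y <= WM M)%MS]|)%N.
Proof.
move=> ind; have [t [t0 t1]] := exists_col ind.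
set A := [set M | (y0 <= WM M)%MS].
set g := fun M : 'M[K]_v => ca y *m M *m Em.
have cB : #|[set w : 'rV[K]_v | (w <= Em)%MS]| = (q ^ r)%N.
  by rewrite card_sub_mx rank_pid_mx.
have wE : forall w : 'rV[K]_v, (w <= Em)%MS -> w *m Em = w.
  by move=> w /submxP[D ->]; rewrite -mulmxA EE.
have le : forall w w', (w <= Em)%MS -> (w' <= Em)%MS ->
    (#|[set M in A | g M == w]| <= #|[set M in A | g M == w']|)%N.
  move=> w w' wE1 wE2.
  rewrite -(card_imset _ (addIr (t *m (w' - w)))).
  apply: subset_leq_card; apply/subsetP => N /imsetP [M].
  rewrite !inE !memW => /andP [/eqP h0 /eqP h1] ->.
  have h1' : ca y *m M *m Em = w := h1.
  rewrite !mulmxDr !mulmxDl !mulmxA t0 !mul0mx !addr0 -h0 eqxx /= /g.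
  rewrite !mulmxDr !mulmxDl !mulmxA t1 !mul1mx h1' mulNmx !wE //.
  by rewrite addrCA subrr addr0.
rewrite -cB; apply: (card_fibers (g := g)) => [M _|w]; first by rewrite inE /g; exact: submxMl.
rewrite inE => wE1.
have -> : [set M | (y0 <= WM M)%MS && (y <= WM M)%MS] = [set M in A | g M == cb y].
  by apply/setP=> M; rewrite !inE [(y <= _)%MS]memW [cb y == _]eq_sym.
by apply/eqP; rewrite eqn_leq !le ?cb_sub.
Qed.

End Coord.



Section Main.
Variables (K : finFieldType) (v r : nat) (S : {set 'M[K]_v}) (L F : 'M[K]_v).
Local Notation q := #|K|.
Hypothesis r0 : (0 < r)%N.
Hypothesis Spt : {subset S <= @is_point K v}.
Hypothesis dS : divisible S (q ^ r).
Hypothesis cS : #|S| = (q ^ r.+1)%N.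
Hypothesis rL : \rank L = r.+1.
Hypothesis rF : \rank F = r.
Hypothesis FL : (F <= L)%MS.
Hypothesis aff : forall P, is_point P -> (P <= L)%MS -> ~~ (P <= F)%MS -> P \in S.

Lemma rv : (r <= v)%N. Proof. by rewrite -rF rank_leq_col. Qed.
Lemma r1v : (r.+1 <= v)%N. Proof. by rewrite -rL rank_leq_col. Qed.
Local Notation W := (WM r F).

Lemma q1 : (1 < q)%N.
Proof. by apply/card_gt1P; exists 0, 1; rewrite !inE eq_sym oner_neq0. Qed.

Lemma W_ge_q M : (q <= pts_in S (W M))%N.
Proof.
have rW := rankW F rv M.
have dq := cong_W r0 rv Spt dS cS rW.
set X := (W M :&: L)%MS.
have rX : (0 < \rank X)%N.
  have := mxrank_sum_cap (W M) L; rewrite rW rL.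
  have := rank_leq_col (W M + L)%MS; have := rv; have := r1v.
  move=> h1 h2 h3 h4; rewrite /X; lia.
have nzX : nz_row X != 0 by rewrite nz_row_eq0 -mxrank_eq0 -lt0n.
have zX := nz_row_sub X.
have zW : (nz_row X <= W M)%MS := submx_trans zX (capmxSl _ _).
have zL : (nz_row X <= L)%MS := submx_trans zX (capmxSr _ _).
set Q := <<nz_row X>>%MS.
have pQ : is_point Q := genmx_point nzX.
have QS : Q \in S.
  apply: aff => //; first by rewrite genmxE.
  rewrite genmxE; apply/negP => zF.
  by rewrite (capWF rF rv zW zF) eqxx in nzX.
have pos : (0 < pts_in S (W M))%N.
  apply/card_gt0P; exists Q; by rewrite !inE QS genmxE.
exact: dvdn_leq.
Qed.

Lemma subsub m1 m2 (A B : 'M[K]_(m1, v)) (C : 'M[K]_(m2, v)) :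
  (A <= C)%MS -> (B <= C)%MS -> (A - B <= C)%MS.
Proof. by move=> ha hb; rewrite addmx_sub // eqmx_opp. Qed.

Lemma key P0 : is_point P0 -> ~~ (P0 <= F)%MS -> P0 \notin S ->
  forall P, P \in S -> ~~ (P <= F + P0)%MS.
Proof.
move=> pP0 nF0 nS0 P1 P1S; apply/negP => P1f.
have [nzy0 ey0] := point_nz_row pP0; set y0 := nz_row P0 in nzy0 ey0.
have y0P0 : forall m (C : 'M[K]_(m, v)), (y0 <= C)%MS = (P0 <= C)%MS.
  by move=> m C; rewrite (point_sub _ pP0).
have Fy0 : forall m (C : 'M[K]_(m, v)), (C <= F + y0)%MS = (C <= F + P0)%MS.
  move=> m C; apply/idP/idP => h; apply: submx_trans h _;
    apply: addsmxS => //; by rewrite ?ey0 ?y0P0.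
have cay0 : ca r F y0 != 0.
  apply: contraNneq nF0 => h.
  rewrite -y0P0 (decomp r F y0) h add0r; by move: (subE_F rF (cb_sub r F y0)).
set MM := [set M | (y0 <= W M)%MS].
have N0pos : (0 < #|MM|)%N.
  have nz0 : ~~ (ca r F y0 <= (0 : 'rV[K]_v))%MS.
    by apply: contra cay0 => /submx0null ->.
  have [t [_ t1]] := exists_col nz0.
  apply/card_gt0P; exists (t *m cb r F y0); rewrite inE memW !mulmxA t1 mul1mx.
  by rewrite /cb -[X in _ == X]mulmxA (EE _ rv).
have lower : (q * #|MM| <= \sum_(M in MM) pts_in S (W M))%N.
  rewrite mulnC -sum_nat_const; apply: leq_sum => M _; exact: W_ge_q.
have sumE : (\sum_(M in MM) pts_in S (W M) =
    \sum_(P in S) #|[set M in MM | (P <= W M)%MS]|)%N.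
  rewrite /pts_in; under eq_bigr do rewrite card_sumb.
  rewrite exchange_big; apply: eq_bigr => P _; by rewrite card_sumb.
have cfib : forall P, P \in S -> (P <= F + P0)%MS ->
    #|[set M in MM | (P <= W M)%MS]| = 0%N.
  move=> P PS Pf; apply: eq_card0 => M; rewrite !inE; apply/negP => /andP[y0W PW].
  have pP := Spt PS; have [nzy ey] := point_nz_row pP; set y := nz_row P in nzy ey.
  have yf : (y <= F + y0)%MS by rewrite Fy0 -(point_sub _ pP).
  have yW : (y <= W M)%MS by rewrite -(point_sub _ pP).
  case/sub_addsmxP: yf => u hu.
  have fW : (y - u.2 *m y0 <= W M)%MS.
    by apply: subsub => //; exact: submx_trans (submxMl _ _) y0W.
  have fF : (y - u.2 *m y0 <= F)%MS by rewrite hu addrK submxMl.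
  have e := capWF rF rv fW fF.
  have yy0 : (y <= y0)%MS by move/eqP: e; rewrite subr_eq0 => /eqP ->; exact: submxMl.
  have sPP0 : (P <= P0)%MS.
    by rewrite (point_sub _ pP); exact: submx_trans yy0 (nz_row_sub P0).
  have PP0 : P = P0 := point_eq pP pP0 sPP0.
  by move: nS0; rewrite -PP0 PS.
have cnf : forall P, P \in S -> ~~ (P <= F + P0)%MS ->
    (q ^ r * #|[set M in MM | (P <= W M)%MS]|)%N = #|MM|.
  move=> P PS Pnf.
  have pP := Spt PS; have [nzy ey] := point_nz_row pP; set y := nz_row P in nzy ey.
  have ind : ~~ (ca r F y <= ca r F y0)%MS.
    apply/negP => /submxP [D hD]; move/negP: Pnf; apply.
    rewrite (point_sub _ pP) -/y -Fy0.
    have -> : y = (y - D *m y0) + D *m y0 by rewrite subrK.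
    apply: addmx_sub_adds; last exact: submxMl.
    have -> : y - D *m y0 = (cb r F y - D *m cb r F y0) *m Bm F.
      rewrite {1}(decomp r F y) {1}(decomp r F y0) hD.
      move: (ca r F y0) (cb r F y0) (cb r F y) (Bm F) => a b c B'.
      by rewrite mulmxA mulmxDr -mulmxBl opprD addrACA subrr add0r.
    have hz : (cb r F y - D *m cb r F y0 <= Em K v r)%MS.
      apply: subsub; first exact: cb_sub.
      exact: submx_trans (submxMl _ _) (cb_sub _ _ _).
    by move: (subE_F rF hz).
  rewrite (count_M rv ind); congr (_ * _)%N; apply: eq_card => M.
  by rewrite !inE (point_sub _ pP).
set k' := #|[set P in S | ~~ (P <= F + P0)%MS]|.
have ub : (q ^ r * \sum_(P in S) #|[set M in MM | (P <= W M)%MS]| = k' * #|MM|)%N.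
  rewrite big_distrr /= (bigID (fun P => (P <= F + P0)%MS)) /=.
  rewrite big1 ?add0n; last by move=> P /andP[PS Pf]; rewrite cfib ?muln0.
  rewrite (eq_bigr (fun _ => #|MM|)); last by move=> P /andP[PS Pf]; rewrite cnf.
  by rewrite sum_const_filter.
have kk : (k' < #|S|)%N.
  have mk : (#|[set P in S | (P <= F + P0)%MS]| + k')%N = #|S|.
    rewrite /k' !card_sumb -big_split /= -sum1_card; apply: eq_bigr => P _.
    by case: (P <= F + P0)%MS.
  rewrite -mk -[X in (X < _)%N]add0n ltn_add2r.
  apply/card_gt0P; exists P1; by rewrite !inE P1S P1f.
have := leq_mul (leqnn (q ^ r)) lower; rewrite sumE ub mulnA -expnSr -cS.
by rewrite leq_pmul2r // leqNgt kk.
Qed.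

End Main.



Lemma sum_cast n m (e : n = m) (f : 'I_m -> nat) :
  (\sum_(i < n) f (cast_ord e i) = \sum_(j < m) f j)%N.
Proof. by case: m / e f => f; apply: eq_bigr => i _; rewrite cast_ord_id. Qed.

Section Fin.
Variables (K : finFieldType) (v r : nat) (S : {set 'M[K]_v}) (L F : 'M[K]_v).
Local Notation q := #|K|.
Hypothesis r0 : (0 < r)%N.
Hypothesis Spt : {subset S <= @is_point K v}.
Hypothesis dS : divisible S (q ^ r).
Hypothesis cS : #|S| = (q ^ r.+1)%N.
Hypothesis rL : \rank L = r.+1.
Hypothesis rF : \rank F = r.
Hypothesis FL : (F <= L)%MS.
Hypothesis aff : forall P, is_point P -> (P <= L)%MS -> ~~ (P <= F)%MS -> P \in S.

Local Notation key := (key r0 Spt dS cS rL rF FL aff).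
Local Notation q1 := (@q1 K).
Local Notation rv := (rv rF).

Lemma card_rV : #|[set: 'rV[K]_v]| = (q ^ v)%N.
Proof. by rewrite cardsT card_mx mul1n. Qed.

Lemma v2 : (r.+2 <= v)%N.
Proof.
have c1 := pts_vec (fun P => P \in S) 1%:M.
have eS : [set P | is_point P && (P \in S) && (P <= 1%:M)%MS] = S.
  apply/setP=> P; rewrite inE submx1 andbT; apply/idP/idP => [/andP[] //|PS].
  by rewrite PS andbT; exact: Spt.
rewrite eS in c1.
have ub : (#|[set y : 'rV[K]_v | (y != 0%R) && (<<y>>%MS \in S) && (y <= 1%:M)%MS]|
             <= q ^ v - 1)%N.
  have := cardsD1 0 [set y : 'rV[K]_v | (y <= 1%:M)%MS].
  rewrite inE sub0mx card_sub_mx mxrank1 add1n => e.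
  rewrite e subn1 /=; apply: subset_leq_card; apply/subsetP => y.
  by rewrite !inE => /andP[/andP[-> _] ->].
rewrite -c1 cS in ub.
rewrite ltnNge; apply/negP => vle.
have : (q ^ v <= q ^ r.+1)%N by rewrite leq_pexp2l // ltnW // q1.
have : (0 < q ^ r.+1)%N by rewrite expn_gt0 ltnW // q1.
have := q1; move: (q ^ v)%N (q ^ r.+1)%N ub => X a; nia.
Qed.

Lemma exP0 : exists P0, [/\ is_point P0, ~~ (P0 <= F)%MS & P0 \notin S].
Proof.
have /existsP [P0 /andP[/andP[pP0 nF0] nS0]] :
    [exists P0, is_point P0 && ~~ (P0 <= F)%MS && (P0 \notin S)]; last by exists P0.
apply: contraT; rewrite negb_exists => /forallP H.
have c2 := pts_vec (fun P => ~~ (P <= F)%MS) 1%:M.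
have le1 : (#|[set P | is_point P && ~~ (P <= F)%MS && (P <= 1%:M)%MS]| <= #|S|)%N.
  apply: subset_leq_card; apply/subsetP => P; rewrite inE => /andP[/andP[pP nP] _].
  by move: (H P); rewrite pP nP /= negbK.
have eR : [set y : 'rV[K]_v | (y != 0) && ~~ (<<y>> <= F)%MS && (y <= 1%:M)%MS] =
          ~: [set y : 'rV[K]_v | (y <= F)%MS].
  apply/setP => y; rewrite !inE genmxE submx1 andbT; apply/idP/idP => [/andP[]//|nyF].
  rewrite nyF andbT; apply: contra nyF => /eqP ->; exact: sub0mx.
rewrite eR in c2.
have cC := cardsC [set y : 'rV[K]_v | (y <= F)%MS].
rewrite card_sub_mx rF card_mx mul1n in cC.
have := leq_mul le1 (leqnn q.-1); rewrite c2 cS.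
have : (q ^ r.+2 <= q ^ v)%N by apply: leq_pexp2l; [exact: ltnW q1 | exact: v2].
have : (0 < q ^ r)%N by rewrite expn_gt0 ltnW // q1.
have := q1; rewrite !expnS.
move: (q ^ v)%N (q ^ r)%N #|~: [set y : 'rV[K]_v | (y <= F)%MS]| cC => X a c cC.
nia.
Qed.

Lemma SF P : P \in S -> ~~ (P <= F)%MS.
Proof.
move=> PS; have [P0 [pP0 nF0 nS0]] := exP0.
apply: contra (key pP0 nF0 nS0 PS) => PF.
exact: submx_trans PF (addsmxSl _ _).
Qed.

Lemma rankFQ Q : is_point Q -> ~~ (Q <= F)%MS -> \rank (F + Q)%MS = r.+1.
Proof.
move=> pQ nQ; have := mxrank_sum_cap F Q; rewrite rF.
have rQ : \rank Q = 1%N by case/andP: pQ => /eqP.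
have -> : \rank (F :&: Q)%MS = 0%N.
  apply/eqP; rewrite mxrank_eq0; apply/negPn/negP => nz.
  have zz : nz_row (F :&: Q)%MS != 0 by rewrite nz_row_eq0.
  have zQ := submx_trans (nz_row_sub _) (capmxSr F Q).
  have zF := submx_trans (nz_row_sub _) (capmxSl F Q).
  move/negP: nQ; apply; by rewrite -(vec_point_eq zz pQ zQ) genmxE.
by rewrite rQ addn0 addn1.
Qed.

Lemma fiber_sub P Q : is_point P -> is_point Q -> ~~ (P <= F)%MS -> ~~ (Q <= F)%MS ->
  (P <= F + Q)%MS -> (Q <= F + P)%MS.
Proof.
move=> pP pQ nP nQ sPQ.
have s : (F + P <= F + Q)%MS by rewrite addsmx_sub addsmxSl.
have e : (F + P == F + Q)%MS by rewrite -(mxrank_leqif_eq s) !rankFQ.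
case/andP: e => _ h; exact: submx_trans (addsmxSr F Q) h.
Qed.

Lemma fiberS P P' : P \in S -> is_point P' -> (P' <= F + P)%MS -> ~~ (P' <= F)%MS ->
  P' \in S.
Proof.
move=> PS pP' s nF'; apply/negPn/negP => nS'.
have := key pP' nF' nS' PS.
by rewrite (fiber_sub pP' (Spt PS) nF' (SF PS) s).
Qed.

Local Notation W0 := (WM r F 0).

Lemma W0F_rank : \rank (W0 :&: F)%MS = 0%N.
Proof.
apply/eqP; rewrite mxrank_eq0; apply/negPn/negP => nz.
have zz : nz_row (W0 :&: F)%MS != 0 by rewrite nz_row_eq0.
have zW := submx_trans (nz_row_sub _) (capmxSl W0 F).
have zF := submx_trans (nz_row_sub _) (capmxSr W0 F).
by rewrite (capWF rF rv zW zF) eqxx in zz.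
Qed.

Definition phi (P : 'M[K]_v) := <<(W0 :&: (F + P))%MS>>%MS.

Lemma phiP P : is_point P -> ~~ (P <= F)%MS ->
  [/\ is_point (phi P), (phi P <= W0)%MS, (phi P <= F + P)%MS & ~~ (phi P <= F)%MS].
Proof.
move=> pP nP.
have rWF : \rank (W0 + F)%MS = v.
  have := mxrank_sum_cap W0 F; rewrite W0F_rank (rankW F rv) rF => h.
  have := rv; lia.
have rWFP : \rank (W0 + (F + P))%MS = v.
  apply/eqP; rewrite eqn_leq rank_leq_col -{1}rWF mxrankS //.
  by rewrite addsmxS // addsmxSl.
have rX : \rank (W0 :&: (F + P))%MS = 1%N.
  have := mxrank_sum_cap W0 (F + P)%MS; rewrite rWFP (rankW F rv) rankFQ //.
  have := rv; have := r1v rL; move=> h1 h2 h3; lia.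
have pX : is_point (phi P) by rewrite /is_point /phi mxrank_gen rX genmx_id !eqxx.
split=> //; rewrite /phi ?genmxE ?capmxSl ?capmxSr //.
apply/negP => XF.
have : (W0 :&: (F + P) <= W0 :&: F)%MS by rewrite sub_capmx capmxSl XF.
move/mxrankS; by rewrite W0F_rank rX.
Qed.

Lemma phi_uniq P Q : is_point P -> ~~ (P <= F)%MS -> is_point Q ->
  (Q <= W0)%MS -> (Q <= F + P)%MS -> Q = phi P.
Proof.
move=> pP nP pQ QW QF; have [pX _ _ _] := phiP pP nP.
by apply: point_eq pQ pX _; rewrite /phi genmxE sub_capmx QW QF.
Qed.

Definition SW := [set Q in S | (Q <= W0)%MS].

Lemma phiS P : P \in S -> phi P \in SW.
Proof.
move=> PS; have [pX XW XF nX] := phiP (Spt PS) (SF PS).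
by rewrite inE XW andbT; apply: fiberS PS pX XF nX.
Qed.

Lemma cSW : #|SW| = q.
Proof.
have fib : forall Q, Q \in SW -> #|[set P in S | phi P == Q]| = (q ^ r)%N.
  move=> Q; rewrite inE => /andP[QS QW].
  have pQ : is_point Q := Spt QS; have nQ := SF QS.
  have -> : [set P in S | phi P == Q] =
            [set P | is_point P && ~~ (P <= F)%MS && (P <= F + Q)%MS].
    apply/setP => P; rewrite !inE; apply/idP/idP.
      case/andP => PS /eqP e; have pP : is_point P := Spt PS; have nP := SF PS.
      have [_ _ h _] := phiP pP nP; rewrite e in h.
      by rewrite pP nP /=; apply: fiber_sub pQ pP nQ nP h.
    case/andP => /andP[pP nP] PQ.
    rewrite (fiberS QS pP PQ nP) /=; apply/eqP; symmetry.
    exact: phi_uniq pP nP pQ QW (fiber_sub pP pQ nP nQ PQ).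
  have c2 := pts_vec (fun P => ~~ (P <= F)%MS) (F + Q)%MS.
  have eR : [set y : 'rV[K]_v | (y != 0) && ~~ (<<y>> <= F)%MS && (y <= F + Q)%MS] =
            [set y : 'rV[K]_v | (y <= F + Q)%MS] :\: [set y : 'rV[K]_v | (y <= F)%MS].
    apply/setP => y; rewrite !inE genmxE.
    apply/idP/idP => [/andP[/andP[_ ->] ->] // | /andP[nyF yFQ]].
    rewrite nyF yFQ !andbT; apply: contra nyF => /eqP ->; exact: sub0mx.
  rewrite eR cardsD card_sub_mx rankFQ // in c2.
  have eI : [set y : 'rV[K]_v | (y <= F + Q)%MS] :&: [set y : 'rV[K]_v | (y <= F)%MS]
          = [set y : 'rV[K]_v | (y <= F)%MS].
    apply/setP => y; rewrite !inE andb_idl // => yF.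
    exact: submx_trans yF (addsmxSl _ _).
  rewrite eI card_sub_mx rF expnS -{2}(mul1n (q ^ r)%N) -mulnBl subn1 [RHS]mulnC in c2.
  apply/eqP; move/eqP: c2; rewrite eqn_mul2r.
  have -> : (q.-1 == 0)%N = false by apply/negbTE; rewrite -lt0n -subn1 subn_gt0 q1.
  by [].
have := card_fibers (A := S) (B := SW) (g := phi) (c := (q ^ r)%N) phiS fib.
rewrite cS expnS => /eqP; rewrite eqn_mul2r expn_eq0 eqn0Ngt (ltnW q1) /= => /eqP.
by [].
Qed.

Lemma cyl : is_cylinder S r.
Proof.
pose Qi := fun i : 'I_q => enum_val (cast_ord (esym cSW) i).
have QiSW : forall i, Qi i \in SW by move=> i; exact: enum_valP.
exists F, (fun i => (F + Qi i)%MS); split => //.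
  move=> i; have := QiSW i; rewrite inE => /andP[QS _].
  by split; [exact: rankFQ (Spt QS) (SF QS) | exact: addsmxSl].
move=> P pP.
have -> : (\sum_(i < q) ((P <= F + Qi i)%MS && ~~ (P <= F)%MS : nat))%N =
          (\sum_(Q in SW) ((P <= F + Q)%MS && ~~ (P <= F)%MS : nat))%N.
  rewrite [RHS]big_enum_val /=.
  exact: (sum_cast (esym cSW) (fun j => ((P <= F + enum_val j)%MS && ~~ (P <= F)%MS : nat))).
case: (boolP (P <= F)%MS) => PF.
  rewrite big1 => [|Q _]; last by rewrite andbF.
  by rewrite (negbTE (contraL (@SF P) PF)).
rewrite (eq_bigr (fun Q => ((P <= F + Q)%MS : nat))) => [|Q _]; last by rewrite /= andbT.
have e : forall Q, Q \in SW -> (P <= F + Q)%MS = (Q == phi P).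
  move=> Q; rewrite inE => /andP[QS QW]; have pQ : is_point Q := Spt QS.
  have nQ := SF QS.
  apply/idP/eqP => [h | ->].
    exact: phi_uniq pP PF pQ QW (fiber_sub pP pQ PF nQ h).
  have [pX _ XP nX] := phiP pP PF; exact: fiber_sub pX pP nX PF XP.
rewrite (eq_bigr (fun Q => (Q == phi P : nat))) => [|Q QSW]; last by rewrite e.
case: (boolP (phi P \in SW)) => h.
  rewrite (bigD1 (phi P)) //= eqxx big1 => [|Q /andP[_ nQ]]; last by rewrite (negbTE nQ).
  move: h; rewrite inE => /andP[XS _].
  have [pX _ XP nX] := phiP pP PF.
  by rewrite (fiberS XS pP (fiber_sub pX pP nX PF XP) PF).
rewrite big1 => [|Q QSW]; last first.
  by apply/eqP; rewrite eqb0; apply: contraNneq h => <-.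
by case: (boolP (P \in S)) => // PS; move: h; rewrite phiS.
Qed.

End Fin.

Theorem mainTheorem10 (K : finFieldType) (v r : nat) (S : {set 'M[K]_v}) :
  (1 <= r)%N ->
  {subset S <= @is_point K v} ->
  divisible S (#|K| ^ r) ->
  spanning S ->
  #|S| = (#|K| ^ r.+1)%N ->
  contains_affine S r ->
  is_cylinder S r.
Proof.
move=> r0 Spt dS _ cS [L [F [rL rF FL aff]]].
exact: cyl r0 Spt dS cS rL rF FL aff.
Qed.
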